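(* Let $K, d, D_{out}, N_H$ be positive integers with $N_H<\min\{K^2,d\}$, and let $H,W\ge K$. Then there exists a convolution kernel $\boldsymbol W^C$ (indexed by $\Delta\times[d]\times[D_{out}]$) such that no multi-head self-attention layer with relative positional encoding, $N_H$ heads, any head dimension $d_H$ and output dimension $D_{out}$, in the pixel-input setting, expresses $\mathrm{conv}(\cdot;\boldsymbol W^C)$ in the sense defined in the context.
   Context: Pixel-input setting: an image $\boldsymbol X\in\mathbb{R}^{H\times W\times d}$ is fed as a sequence of $N=HW$ tokens, one per pixel $\gamma\in[H]\times[W]$, with feature $\boldsymbol X_{\gamma,:}\in\mathbb{R}^d$. Convolution: $\Delta=\{-\lfloor K/2\rfloor,\dots,\lfloor K/2\rfloor\}^2$, kernel blocks $\boldsymbol W^C_{\delta,:,:}\in\mathbb{R}^{d\times D_{out}}$ for $\delta\in\Delta$, $\mathrm{conv}(\boldsymbol X)_{\gamma,:}=\sum_{\delta\in\Delta}\boldsymbol X_{\gamma+\delta,:}\boldsymbol W^C_{\delta,:,:}$, defined at pixels $\gamma$ with $\gamma+\delta\in[H]\times[W]$ for all $\delta\in\Delta$. MHSA layer with relative positional encoding (no bias terms): for head $k\in[N_H]$, matrices $\boldsymbol W^Q_k,\boldsymbol W^K_k,\boldsymbol W^V_k\in\mathbb{R}^{d\times d_H}$, $\boldsymbol W^O_k\in\mathbb{R}^{d_H\times D_{out}}$ and scalars $b^{(k)}_{u}$ for $u\in\mathbb{Z}^2$, $|u_1|\le H-1$, $|u_2|\le W-1$; $\boldsymbol B^{(k)}_{\gamma,\gamma'}=b^{(k)}_{\gamma-\gamma'}$;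 for $\boldsymbol Z\in\mathbb{R}^{N\times d}$, $\mathrm{SA}_k(\boldsymbol Z)=\mathrm{softmax}(\boldsymbol Z\boldsymbol W^Q_k(\boldsymbol Z\boldsymbol W^K_k)^\top/\sqrt d+\boldsymbol B^{(k)})\boldsymbol Z\boldsymbol W^V_k$ (row-wise softmax) and $\mathrm{MHSA}(\boldsymbol Z)=\sum_{k=1}^{N_H}\mathrm{SA}_k(\boldsymbol Z)\boldsymbol W^O_k$. Expressing: a layer expresses $\mathrm{conv}(\cdot;\boldsymbol W^C)$ if for every $\boldsymbol X\in\mathbb{R}^{H\times W\times d}$ and every pixel $\gamma$ at which the convolution is defined, $\mathrm{MHSA}(\boldsymbol X)_{\gamma,:}=\mathrm{conv}(\boldsymbol X)_{\gamma,:}$. *)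

(* Defs.v *)
From HB Require Import structures.
From mathcomp Require Import all_boot all_order all_algebra.
From mathcomp Require Import reals sequences exp.
Set Implicit Arguments. Unset Strict Implicit. Unset Printing Implicit Defensive.
Import Order.TTheory GRing.Theory Num.Theory.
Local Open Scope ring_scope.

Section Defs.
Variables (R : realType) (H W d : nat).

(* pixels gamma in [H] x [W]; an image X in R^{H x W x d} is the map
   gamma |-> X_{gamma,:} in R^d (a row vector). *)
Definition pixel := ('I_H * 'I_W)%type.
Definition image := pixel -> 'rV[R]_d.

(* the feature of X at integer coordinates (i, j); zero outside the grid
   (only ever used where the convolution is defined, i.e. inside the grid) *)
Definition feat_at (X : image) (i j : int) : 'rV[R]_d :=
  match @insub nat (fun n => n < H)%N 'I_H `|i|%N,
        @insub nat (fun n => n < W)%N 'I_W `|j|%N with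
  | Some a, Some b => if (0 <= i) && (0 <= j) then X (a, b) else 0
  | _, _ => 0
  end.

(* Offsets: Delta = {-floor(K/2),...,floor(K/2)}^2; for odd K this is in
   bijection with 'I_K * 'I_K via  i |-> i - floor(K/2). *)
Definition offset (K : nat) (i : 'I_K) : int := (i%:Z - (K./2)%:Z)%R.

Definition conv_defined (K : nat) (g : pixel) : Prop :=
  forall dl : 'I_K * 'I_K,
    (0 <= (g.1)%:Z + offset dl.1 < H%:Z) /\ (0 <= (g.2)%:Z + offset dl.2 < W%:Z).

Definition conv (K Dout : nat) (WC : 'I_K * 'I_K -> 'M[R]_(d, Dout))
    (X : image) (g : pixel) : 'rV[R]_Dout :=
  \sum_(dl : 'I_K * 'I_K)
     feat_at X ((g.1)%:Z + offset dl.1) ((g.2)%:Z + offset dl.2) *m WC dl.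

Definition att_logit (dH : nat) (WQ WK : 'M[R]_(d, dH)) (b : int -> int -> R)
    (Z : image) (g g' : pixel) : R :=
  ((Z g *m WQ) *m (Z g' *m WK)^T) ord0 ord0 / Num.sqrt (d%:R)
  + b ((g.1)%:Z - (g'.1)%:Z) ((g.2)%:Z - (g'.2)%:Z).

Definition softmax_row (s : pixel -> R) (g' : pixel) : R :=
  expR (s g') / \sum_(g'' : pixel) expR (s g'').

Definition self_att (dH : nat) (WQ WK WV : 'M[R]_(d, dH)) (b : int -> int -> R)
    (Z : image) (g : pixel) : 'rV[R]_dH :=
  \sum_(g' : pixel) softmax_row (att_logit WQ WK b Z g) g' *: (Z g' *m WV).

Definition mhsa (NH dH Dout : nat) (WQ WK WV : 'I_NH -> 'M[R]_(d, dH))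
    (WO : 'I_NH -> 'M[R]_(dH, Dout)) (b : 'I_NH -> int -> int -> R)
    (Z : image) (g : pixel) : 'rV[R]_Dout :=
  \sum_(k < NH) self_att (WQ k) (WK k) (WV k) (b k) Z g *m WO k.

Definition expresses (NH dH K Dout : nat) (WQ WK WV : 'I_NH -> 'M[R]_(d, dH))
    (WO : 'I_NH -> 'M[R]_(dH, Dout)) (b : 'I_NH -> int -> int -> R)
    (WC : 'I_K * 'I_K -> 'M[R]_(d, Dout)) : Prop :=
  forall (X : image) (g : pixel), conv_defined K g ->
    mhsa WQ WK WV WO b X g = conv WC X g.

End Defs.

(* Main.v *)
Require Import Defs.
From HB Require Import structures.
From mathcomp Require Import all_boot all_order all_algebra.
From mathcomp Require Import reals sequences exp.
Import Order.TTheory GRing.Theory Num.Theory.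
Local Open Scope ring_scope.

From mathcomp Require Import zify.
Definition ncen (K : nat) := (K./2 * K + K./2)%N.
Definition posm K (n : nat) : nat :=
  if n == 0%N then ncen K else if (n <= ncen K)%N then n.-1 else n.
Definition posn K (n : nat) : 'I_K.+1 * 'I_K.+1 :=
  (inord (posm K.+1 n %/ K.+1), inord (posm K.+1 n %% K.+1)).

Lemma half_lt K : (K.+1./2 < K.+1)%N.
Proof. rewrite -divn2 ltn_divLR //; lia. Qed.

Lemma ncen_lt K : (ncen K.+1 < K.+1 ^ 2)%N.
Proof.
have h := half_lt K. rewrite /ncen expnS expn1.
have : (K.+1./2 * K.+1 + K.+1./2 < K.+1./2 * K.+1 + K.+1)%N by rewrite ltn_add2l.
move=> /leq_trans; apply. rewrite -[X in (_ + X)%N]mul1n -mulnDl addn1. by apply: leq_mul.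
Qed.

Lemma posm_lt K n : (n < K.+1 ^ 2)%N -> (posm K.+1 n < K.+1 ^ 2)%N.
Proof.
move=> hn; rewrite /posm; case: eqP => _; first exact: ncen_lt.
case: ifP => _ //; exact: leq_ltn_trans (leq_pred n) hn.
Qed.

Lemma posm_inj K n n' : posm K n = posm K n' -> n = n'.
Proof.
rewrite /posm; case: eqP => h1; case: eqP => h2 //;
  repeat case: ifP => ? ; lia.
Qed.

Lemma posn_inj K n n' : (n < K.+1 ^ 2)%N -> (n' < K.+1 ^ 2)%N ->
  posn K n = posn K n' -> n = n'.
Proof.
move=> hn hn' [] h1 h2.
have hm := posm_lt _ _ hn; have hm' := posm_lt _ _ hn'.
have hb m : (m < K.+1 ^ 2)%N -> (m %/ K.+1 < K.+1)%N.
  by move=> hm0; rewrite ltn_divLR // -expnSr.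
have ha m : (m %% K.+1 < K.+1)%N by rewrite ltn_pmod.
move: h1 h2; move/(congr1 val); rewrite /= !inordK ?hb // => h1.
move/(congr1 val); rewrite /= !inordK ?ha // => h2.
apply: (posm_inj K.+1); by rewrite (divn_eq (posm K.+1 n) K.+1) (divn_eq (posm K.+1 n') K.+1) h1 h2.
Qed.

Lemma posn0 K : (val (posn K 0).1 = K.+1./2) /\ (val (posn K 0).2 = K.+1./2).
Proof.
have h := half_lt K.
rewrite /posn /posm /ncen /=.
have e1 : ((K.+1./2 * K.+1 + K.+1./2) %/ K.+1 = K.+1./2)%N.
  by rewrite divnMDl // divn_small // addn0.
have e2 : ((K.+1./2 * K.+1 + K.+1./2) %% K.+1 = K.+1./2)%N.
  by rewrite modnMDl modn_small.
by rewrite e1 e2 !inordK.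
Qed.
Set Implicit Arguments.
Section Aux.
Variables (R : realType) (H W d : nat).

Definition single (p : pixel H W) (x : 'rV[R]_d) : Defs.image R H W d :=
  fun q => if q == p then x else 0.

Lemma feat_atE (X : Defs.image R H W d) (n m : nat) (hn : (n < H)%N) (hm : (m < W)%N) :
  feat_at X (Posz n) (Posz m) = X (Ordinal hn, Ordinal hm).
Proof.
rewrite /feat_at.
rewrite (insubT (fun n => n < H)%N hn) (insubT (fun n => n < W)%N hm) /=.
done.
Qed.

Lemma mhsa_single NH dH Dout (WQ WK WV : 'I_NH -> 'M[R]_(d, dH))
    (WO : 'I_NH -> 'M[R]_(dH, Dout)) (b : 'I_NH -> int -> int -> R) p x g :
  mhsa WQ WK WV WO b (single p x) g =
  \sum_k softmax_row (att_logit (WQ k) (WK k) (b k) (single p x) g) p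
          *: (x *m (WV k *m WO k)).
Proof.
apply: eq_bigr => k _; rewrite /self_att (bigD1 p) //= big1 ?addr0.
  by rewrite /single eqxx -scalemxAl mulmxA.
by move=> q /negbTE hq; rewrite /single hq mul0mx scaler0.
Qed.

Lemma att_logit0 dH (WQ WK : 'M[R]_(d, dH)) b (Z : Defs.image R H W d) g g' :
  Z g = 0 -> att_logit WQ WK b Z g g' = b ((g.1)%:Z - (g'.1)%:Z) ((g.2)%:Z - (g'.2)%:Z).
Proof. by move=> hz; rewrite /att_logit hz !mul0mx mxE mul0r add0r. Qed.

End Aux.
Arguments single {R H W d}.
Arguments feat_atE {R H W d} X {n m}.
Arguments mhsa_single {R H W d NH dH Dout}.
Arguments att_logit0 {R H W d dH}.
Unset Implicit Arguments.

Definition Bm (R : fieldType) NH d : 'M[R]_(NH, d) := \matrix_(i, j) ((j : nat) == i.+1)%:R.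

Lemma BBt (R : fieldType) NH d : (NH < d.+1)%N -> Bm R NH d.+1 *m (Bm R NH d.+1)^T = 1%:M.
Proof.
move=> hNd; apply/matrixP => i i'; rewrite !mxE (bigD1 (inord i.+1)) //= big1 ?addr0.
  rewrite !mxE inordK ?eqSS ?eqxx ?mul1r //; apply: leq_ltn_trans (ltn_ord i) hNd.
move=> j hj; rewrite !mxE.
have -> : ((j : nat) == i.+1) = false.
  apply/negbTE; apply: contra hj => /eqP hj.
  by apply/eqP/val_inj; rewrite /= hj inordK //; apply: leq_ltn_trans (ltn_ord i) hNd.
by rewrite mul0r.
Qed.

Lemma col0_zero (R : fieldType) NH d (C : 'M[R]_NH) (A : 'M[R]_(NH, d.+1)) :
  (NH < d.+1)%N -> C *m A = Bm R NH d.+1 -> forall k, A k ord0 = 0.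
Proof.
move=> hNd BCA k.
pose D := A *m (Bm R NH d.+1)^T.
have CD : C *m D = 1%:M by rewrite mulmxA BCA BBt.
have DC := mulmx1C CD.
have AD : A = D *m Bm R NH d.+1 by rewrite -BCA mulmxA DC mul1mx.
by rewrite AD mxE big1 // => i _; rewrite [Bm _ _ _ i _]mxE mulr0.
Qed.

Theorem theorem2 (R : realType) (K d Dout NH H W : nat) :
  (0 < K)%N -> (0 < d)%N -> (0 < Dout)%N -> (0 < NH)%N -> odd K ->
  (NH < minn (K ^ 2) d)%N -> (K <= H)%N -> (K <= W)%N ->
  exists WC : 'I_K * 'I_K -> 'M[R]_(d, Dout),
    forall (dH : nat), (0 < dH)%N ->
    forall (WQ WK WV : 'I_NH -> 'M[R]_(d, dH))
           (WO : 'I_NH -> 'M[R]_(dH, Dout))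
           (b : 'I_NH -> int -> int -> R),
      ~ @expresses R H W d NH dH K Dout WQ WK WV WO b WC.
Proof.
case: K => // K; case: d => // d; case: Dout => // Dout.
move=> _ _ _ _ _ hmin KH KW.
move: hmin; rewrite leq_min => /andP[hNK hNd].
pose WC (dl : 'I_K.+1 * 'I_K.+1) : 'M[R]_(d.+1, Dout.+1) :=
  \matrix_(r, c) (((c : nat) == 0%N) && (r <= NH)%N && (dl == posn K r))%:R.
exists WC => dH _ WQ WK WV WO b E.
have hh := half_lt K.
pose g0 : pixel H W := (Ordinal (leq_trans hh KH), Ordinal (leq_trans hh KW)).
pose pdl (dl : 'I_K.+1 * 'I_K.+1) : pixel H W := (widen_ord KH dl.1, widen_ord KW dl.2).
have pdl_inj : injective pdl.
  by move=> [a1 a2] [b1 b2] [] /= /val_inj e1 /val_inj e2; rewrite e1 e2.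
have pdl0 : pdl (posn K 0) = g0.
  by case: (posn0 K) => e1 e2; congr pair; apply: val_inj; rewrite /= ?e1 ?e2.
have offE (i : 'I_K.+1) : ((K.+1./2)%:Z + offset i = i%:Z)%R.
  by rewrite /offset addrC subrK.
have Hcd : conv_defined K.+1 g0.
  move=> dl; rewrite /= !offE; split; apply/andP; split => //; rewrite ltz_nat.
    exact: leq_trans (ltn_ord _) KH.
  exact: leq_trans (ltn_ord _) KW.
have Hconv x dl : conv WC (single (pdl dl) x) g0 = x *m WC dl.
  rewrite /conv (bigD1 dl) //= big1 ?addr0.
    by rewrite !offE (feat_atE _ (leq_trans (ltn_ord _) KH) (leq_trans (ltn_ord _) KW))
       /single; congr (_ *m _); rewrite ifT //; apply/eqP; congr pair; apply: val_inj.
  move=> dl' hdl'; rewrite !offE (feat_atE _ (leq_trans (ltn_ord _) KH) (leq_trans (ltn_ord _) KW)).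
  rewrite /single ifF ?mul0mx //; apply/eqP => e; move/negP: hdl'; apply; apply/eqP.
  by apply: pdl_inj; rewrite -e; congr pair; apply: val_inj.
pose M k := WV k *m WO k.
pose c k dl := softmax_row (fun g' : pixel H W => b k ((g0.1)%:Z - (g'.1)%:Z) ((g0.2)%:Z - (g'.2)%:Z)) (pdl dl).
have Hnc dl (x : 'rV[R]_d.+1) : dl != posn K 0 -> x *m WC dl = \sum_k c k dl *: (x *m M k).
  move=> hdl; rewrite -(Hconv x dl) -E // mhsa_single; apply: eq_bigr => k _.
  congr (softmax_row _ _ *: _); apply: boolp.funext => g'; apply: att_logit0.
  rewrite /single ifF //; apply/eqP => e; move/negP: hdl; apply; apply/eqP.
  by apply: pdl_inj; rewrite pdl0 -e.
have hNK' : (NH <= K.+1 ^ 2)%N by apply: ltnW.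
pose C : 'M[R]_NH := \matrix_(i, k) c k (posn K i.+1).
pose A : 'M[R]_(NH, d.+1) := \matrix_(k, j) M k j ord0.
have WCE (i : 'I_NH) (j : 'I_d.+1) : WC (posn K i.+1) j ord0 = ((j : nat) == i.+1)%:R.
  rewrite mxE eqxx /=; case: (leqP j NH) => hj /=.
    suff -> : (posn K i.+1 == posn K j) = ((j : nat) == i.+1) by []. apply/idP/idP => [/eqP/(posn_inj K _ _ (leq_ltn_trans (ltn_ord i) hNK) (leq_ltn_trans hj hNK)) ->|/eqP ->] //.
  suff -> : ((j : nat) == i.+1) = false by []. apply/negbTE; by rewrite neq_ltn (leq_ltn_trans (ltn_ord i) hj) orbT.
have hne (i : 'I_NH) : posn K i.+1 != posn K 0.
  by apply/eqP => /(posn_inj K _ _ (leq_ltn_trans (ltn_ord i) hNK) (leq_ltn_trans (leq0n _) hNK)).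
have BCA : C *m A = Bm R NH d.+1.
  apply/matrixP => i j.
  have := congr1 (fun v : 'rV[R]_Dout.+1 => v ord0 ord0) (Hnc (posn K i.+1) (delta_mx 0 j) (hne i)).
  rewrite /= -rowE (mxE _ _ _ ord0) WCE summxE => h.
  rewrite [Bm _ _ _ i j]mxE h [(C *m A) i j]mxE; apply: eq_bigr => k _; symmetry.
  rewrite [C i k]mxE [A k j]mxE -rowE mxE; congr (_ * _); by rewrite mxE.
have A0 := col0_zero _ _ _ _ _ hNd BCA.
have := congr1 (fun v : 'rV[R]_Dout.+1 => v ord0 ord0) (E (single (pdl (posn K 0)) (delta_mx 0 ord0)) g0 Hcd).
rewrite /= Hconv mhsa_single -rowE (mxE _ _ _ ord0) summxE big1.
  rewrite [WC _ _ _]mxE /= => /eqP; rewrite eq_sym.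
  by rewrite eqxx oner_eq0.
move=> k _; rewrite -rowE.
have h0 : (WV k *m WO k) ord0 ord0 = 0 by have := A0 k; rewrite [A k ord0]mxE.
by rewrite [X in X = 0]mxE (mxE _ _ _ ord0) h0 mulr0.
Qed.
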